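(* Let $k\ge 3$ and let $\mathbf a=(a_1,\dots,a_k)$ be positive integers with $\gcd(a_1,\dots,a_k)=1$. Then $\mathcal T(\mathbf a)$ is old regular if and only if there is an index $i\in\{1,\dots,k\}$ such that $\mathcal T(\mathbf a[i])$ is primitive and regular and $a_i\mathbb Z_p\subseteq\overline{DQ_p(\mathbf a[i])}$ for all odd primes $p$.
   Context: For positive integers $a_1,\dots,a_k$, the triangular form $\mathcal T(a_1,\dots,a_k)$ is the polynomial $\sum_{i=1}^k a_i\,\frac{x_i(x_i+1)}{2}$. A nonnegative integer $n$ is represented by it if $\sum a_i x_i(x_i+1)/2=n$ has a solution $x\in\mathbb Z^k$, and locally represented if this equation has a solution in $\mathbb Z_p^k$ for every prime $p$. The form is primitive if the gcd of its coefficients is 1, and regular if it represents every positive integer that it locally represents. For $\mathbf a=(a_1,\dots,a_k)$ and $1\le i\le k$, $\mathbf a[i]$ denotes the vector obtained by deleting $a_i$. A regular form $\mathcal T(\mathbf a)$ is old if there is an index $i$ such that $\mathcal T(\mathbf a[i])$ represents exactly the same set of positive integers as $\mathcal T(\mathbf a)$; it is new if it is regular and not old. For a vector $\mathbf b=(b_1,\dots,b_r)$ of positive integers and an odd prime $p$, $\overline{DQ_p(\mathbf b)}=\{\gamma\in\mathbb Z_p:\gamma=\sum_i b_iy_i^2\text{ for some }y_i\in\mathbb Z_p\}$. *)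

(* Defs.v *)
From mathcomp Require Import all_boot all_order all_algebra.
Set Implicit Arguments. Unset Strict Implicit. Unset Printing Implicit Defensive.
Import Order.TTheory GRing.Theory Num.Theory.
Local Open Scope ring_scope.

(* A coefficient vector a = (a_1,...,a_k) is a [seq nat]; a`_j is a_(j+1). *)

Definition tri (x : int) : int := ((x * (x + 1)) %/ 2)%Z.

Definition represents (a : seq nat) (n : nat) : Prop :=
  exists x : seq int, size x = size a /\
    \sum_(j < size a) (nth 0%N a j)%:Z * tri (nth 0 x j) = n%:Z.

(* p-adic integers Z_p = inverse limit of Z/p^m Z : an element is a
   sequence x of integer representatives with x (m+1) = x m (mod p^m),
   x m representing the residue modulo p^m. *)
Definition padic (p : nat) (x : nat -> int) : Prop :=
  forall m : nat, ((p ^ m)%:Z %| x m.+1 - x m)%Z.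

Definition zfun0 : nat -> int := fun _ => 0.

(* T(a) represents n over Z_p: there are x_1..x_k in Z_p with
   sum a_j x_j (x_j+1) / 2 = n, i.e. (Z_p being a domain of char 0)
   sum a_j x_j (x_j+1) = 2n in Z_p, i.e. modulo every p^m. *)
Definition padic_represents (p : nat) (a : seq nat) (n : nat) : Prop :=
  exists x : seq (nat -> int), size x = size a /\
    (forall j, (j < size a)%N -> padic p (nth zfun0 x j)) /\
    forall m : nat,
      ((p ^ m)%:Z %|
         \sum_(j < size a) (nth 0%N a j)%:Z * (nth zfun0 x j m * (nth zfun0 x j m + 1))
         - 2%:Z * n%:Z)%Z.

Definition loc_represents (a : seq nat) (n : nat) : Prop :=
  forall p : nat, prime p -> padic_represents p a n.

Definition coef_gcd (a : seq nat) : nat := foldr gcdn 0%N a.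

Definition primitive (a : seq nat) : Prop := coef_gcd a = 1%N.

Definition regular (a : seq nat) : Prop :=
  forall n : nat, (0 < n)%N -> loc_represents a n -> represents a n.

(* a[i] : delete the i-th entry (0-based). *)
Definition del (a : seq nat) (i : nat) : seq nat := take i a ++ drop i.+1 a.

Definition old_regular (a : seq nat) : Prop :=
  regular a /\
  exists i : nat, (i < size a)%N /\
    forall n : nat, (0 < n)%N -> (represents (del a i) n <-> represents a n).

Definition new_regular (a : seq nat) : Prop := regular a /\ ~ old_regular a.

(* gamma in closure(DQ_p(b)): gamma = sum b_j y_j^2 with y_j in Z_p. *)
Definition in_DQp (p : nat) (b : seq nat) (g : nat -> int) : Prop :=
  exists y : seq (nat -> int), size y = size b /\
    (forall j, (j < size b)%N -> padic p (nth zfun0 y j)) /\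
    forall m : nat,
      ((p ^ m)%:Z %| g m - \sum_(j < size b) (nth 0%N b j)%:Z * (nth zfun0 y j m) ^+ 2)%Z.

Definition scaled_Zp_sub_DQp (p : nat) (c : nat) (b : seq nat) : Prop :=
  forall g : nat -> int, padic p g -> in_DQp p b (fun m => c%:Z * g m).

(* Main.v *)
Require Import Defs.
From mathcomp Require Import all_boot all_order all_algebra.
From mathcomp Require Import ring lra zify.
From Stdlib Require Import Classical ClassicalEpsilon.
Import Order.TTheory GRing.Theory Num.Theory.
Local Open Scope ring_scope.


Lemma two_dvd_tri (x : int) : (2 %| x * (x + 1))%Z.
Proof.
have := divz_eq x 2. set q := (x %/ 2)%Z. set r := (x %% 2)%Z.
have h0 : 0 <= r by apply: modz_ge0.
have h1 : r < 2 by apply: ltz_pmod.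
move=> ->.
have : r = 0 \/ r = 1 by lia.
case=> ->; apply/dvdzP.
  by exists (q * (q * 2 + 0 + 1)); ring.
by exists ((q * 2 + 1) * (q + 1)); ring.
Qed.

Lemma tri2 (x : int) : 2 * tri x = x * (x + 1).
Proof. by rewrite /tri mulrC divzK // two_dvd_tri. Qed.

Lemma tri_ge0 (x : int) : 0 <= tri x.
Proof.
have h := tri2 x.
have : 0 <= x * (x + 1) by nia.
lia.
Qed.

Definition dl {T : Type} (s : seq T) (i : nat) := take i s ++ drop i.+1 s.
Lemma del_dl (a : seq nat) i : del a i = dl a i. Proof. by []. Qed.
Definition ins {T : Type} (s : seq T) (i : nat) (e : T) := take i s ++ e :: drop i s.

Lemma size_del (T : Type) (s : seq T) i : (i < size s)%N -> size (dl s i) = (size s).-1.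
Proof. move=> h; rewrite /dl size_cat size_take size_drop h; lia. Qed.

Lemma nth_del (T : Type) (x0 : T) (s : seq T) i j : (i < size s)%N ->
  nth x0 (dl s i) j = nth x0 s (if (j < i)%N then j else j.+1).
Proof.
move=> h; rewrite /dl nth_cat size_take h.
case: ifP => hj; first by rewrite nth_take.
rewrite nth_drop; congr nth; lia.
Qed.

Lemma size_ins (T : Type) (s : seq T) i e : (i <= size s)%N -> size (ins s i e) = (size s).+1.
Proof.
move=> h; rewrite /ins size_cat /= size_take size_drop.
case: ltnP => h2; lia.
Qed.

Lemma nth_ins_i (T : Type) (x0 : T) (s : seq T) i e : (i <= size s)%N -> nth x0 (ins s i e) i = e.
Proof.
move=> h; rewrite /ins nth_cat size_take.
have -> : (if (i < size s)%N then i else size s) = i by case: ltnP => //; lia.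
by rewrite ltnn subnn.
Qed.

Lemma nth_ins (T : Type) (x0 : T) (s : seq T) i e j : (i <= size s)%N ->
  nth x0 (ins s i e) (if (j < i)%N then j else j.+1) = nth x0 s j.
Proof.
move=> h; rewrite /ins nth_cat size_take.
have -> : (if (i < size s)%N then i else size s) = i by case: ltnP => //; lia.
case: (ltnP j i) => hj; first by rewrite hj nth_take.
have -> : (j.+1 < i)%N = false by lia.
have -> : (j.+1 - i = (j - i).+1)%N by lia.
rewrite /= nth_drop; congr nth; lia.
Qed.

Lemma sum_del (n i : nat) (h : nat -> int) : (i < n)%N ->
  \sum_(j < n) h j = h i + \sum_(j < n.-1) h (if (j < i)%N then (j : nat) else j.+1).
Proof.
case: n => // n hi /=.
rewrite -(big_mkord xpredT h).
rewrite -(big_mkord xpredT (fun j => h (if (j < i)%N then j else j.+1))).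
rewrite (big_cat_nat _ (n := i)) //=; last lia.
rewrite [X in _ = _ + X](big_cat_nat _ (n := i)) //=.
rewrite [\sum_(i <= j < n.+1) h j]big_ltn //.
rewrite addrCA; congr (_ + _); congr (_ + _).
  by apply: eq_big_nat => j hj; rewrite (_ : (j < i)%N = true) //; lia.
rewrite -{1}(add0n i.+1) -addn1 big_addn.
rewrite [in RHS](big_addn 0 n i).
rewrite (_ : (n.+1 - (i + 1) = n - i)%N); last lia.
apply: eq_big_nat => j hj.
rewrite (_ : (j + i < i)%N = false); last lia.
congr h; lia.
Qed.

Lemma sum_ins_gen (a : seq nat) (v : seq int) i e (F : nat -> int -> int) :
  (i < size a)%N -> (i <= size v)%N ->
  \sum_(j < size a) F (nth 0%N a j) (nth 0 (ins v i e) j) =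
  F (nth 0%N a i) e + \sum_(j < size (del a i)) F (nth 0%N (del a i) j) (nth 0 v j).
Proof.
move=> ha hv; rewrite (@sum_del _ _ (fun j => F (nth 0%N a j) (nth 0 (ins v i e) j)) ha).
rewrite nth_ins_i // del_dl size_del //; congr (_ + _).
apply: eq_bigr => j _; by rewrite nth_del // nth_ins.
Qed.

Lemma sum_del_gen (a : seq nat) (v : seq int) i (F : nat -> int -> int) :
  (i < size a)%N -> (i < size v)%N ->
  \sum_(j < size a) F (nth 0%N a j) (nth 0 v j) =
  F (nth 0%N a i) (nth 0 v i) + \sum_(j < size (del a i)) F (nth 0%N (del a i) j) (nth 0 (dl v i) j).
Proof.
move=> ha hv; rewrite (@sum_del _ _ (fun j => F (nth 0%N a j) (nth 0 v j)) ha).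
rewrite del_dl size_del //; congr (_ + _).
apply: eq_bigr => j _; by rewrite !nth_del.
Qed.

Definition vals (X : seq (nat -> int)) (m : nat) : seq int := [seq f m | f <- X].

Lemma nth_vals X m j : nth 0 (vals X m) j = nth zfun0 X j m.
Proof.
case: (ltnP j (size X)) => h; first by rewrite /vals (nth_map zfun0).
by rewrite !nth_default // /vals size_map.
Qed.

Lemma size_vals X m : size (vals X m) = size X.
Proof. by rewrite size_map. Qed.


Definition red (q : int) (v : seq int) : seq int := [seq (x %% q)%Z | x <- v].

Fixpoint vecs (k R : nat) : seq (seq int) :=
  if k is k'.+1 then [seq x :: t | x <- [seq Posz r | r <- iota 0 R], t <- vecs k' R]
  else [:: [::]].

Lemma mem_vecs k R (v : seq int) : size v = k ->
  (forall j, (j < k)%N -> 0 <= nth 0 v j < R%:Z) -> v \in vecs k R.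
Proof.
elim: k v => [|k IH] [|x v] //= [hs] h.
apply: allpairs_f.
  have /andP[h1 h2] := h 0%N isT.
  have -> : x = Posz `|x|%N by rewrite gez0_abs.
  apply: map_f; rewrite mem_iota /= add0n -ltz_nat gez0_abs //.
apply: IH => // j hj; exact: (h j.+1).
Qed.

Lemma dvd_sub_mod (x q : int) : (q %| x - (x %% q)%Z)%Z.
Proof. apply/dvdzP; exists (x %/ q)%Z; rewrite {1}(divz_eq x q); ring. Qed.

Lemma mod_mod_dvd (x d q : int) : (d %| q)%Z -> ((x %% q)%Z %% d)%Z = (x %% d)%Z.
Proof.
move=> hdq; apply/eqP; rewrite eqz_mod_dvd.
have -> : (x %% q)%Z - x = - (x - (x %% q)%Z) by ring.
rewrite rpredN; exact: dvdz_trans hdq (dvd_sub_mod x q).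
Qed.

Lemma red_red (m n : nat) (p : nat) v : (m <= n)%N ->
  red (p ^ m)%:Z (red (p ^ n)%:Z v) = red (p ^ m)%:Z v.
Proof.
move=> h; rewrite /red -map_comp; apply: eq_map => x /=.
apply: mod_mod_dvd; rewrite dvdzE /=; exact: dvdn_exp2l.
Qed.

Section Compact.
Variables (p k : nat) (P : nat -> seq int -> Prop).
Hypothesis p_gt0 : (0 < p)%N.
Hypothesis Pinv : forall M v w, size v = k -> size w = k ->
  (forall j, ((p ^ M)%:Z %| nth 0 v j - nth 0 w j)%Z) -> P M v -> P M w.
Hypothesis Pmon : forall M v, P M.+1 v -> P M v.
Hypothesis Pex : forall M, exists v, size v = k /\ P M v.

Lemma Pmon_le M N v : (M <= N)%N -> P N v -> P M v.
Proof.
move=> h; elim: N h => [|N IH] h; first by have -> : M = 0%N by lia.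
case: (ltnP M N.+1) => h2; last by have -> : M = N.+1 by lia.
move=> /Pmon; apply: IH; lia.
Qed.

Definition good m r := forall M, (m <= M)%N ->
  exists x, size x = k /\ P M x /\ red (p ^ m)%:Z x = r.

Lemma red_entries m x j : (j < size x)%N -> 0 <= nth 0 (red (p ^ m)%:Z x) j < (p ^ m)%N%:Z.
Proof.
move=> hj; rewrite /red (nth_map 0) //.
have hp : (0 < (p ^ m)%N)%N by rewrite expn_gt0 p_gt0.
apply/andP; split; first by apply: modz_ge0; lia.
apply: ltz_pmod; lia.
Qed.

Lemma good_step m r : good m r -> exists r', good m.+1 r' /\ red (p ^ m)%:Z r' = r.
Proof.
move=> hg; apply: NNPP => hn.
have hQ : forall r', exists M, red (p ^ m)%:Z r' = r ->
   (m.+1 <= M)%N /\ ~ (exists x, size x = k /\ P M x /\ red (p ^ m.+1)%:Z x = r').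
  move=> r'; case: (classic (red (p ^ m)%:Z r' = r)) => hr; last by exists 0%N.
  have : ~ good m.+1 r' by move=> hg'; apply: hn; exists r'.
  move=> /not_all_ex_not [M hM]; exists M => _.
  case: (ltnP M m.+1) => hM1; first by exfalso; apply: hM => hh; lia.
  split => // hx; apply: hM => _; exact: hx.
pose f r' := proj1_sig (constructive_indefinite_description _ (hQ r')).
have hf r' : red (p ^ m)%:Z r' = r ->
   (m.+1 <= f r')%N /\ ~ (exists x, size x = k /\ P (f r') x /\ red (p ^ m.+1)%:Z x = r').
  exact: (proj2_sig (constructive_indefinite_description _ (hQ r'))).
pose N := maxn m.+1 (\max_(r' <- vecs k (p ^ m.+1)) f r').
have [x [hx1 [hx2 hx3]]] := hg N (leq_trans (leqnSn m) (leq_maxl _ _)).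
pose r' := red (p ^ m.+1)%:Z x.
have hr' : red (p ^ m)%:Z r' = r by rewrite /r' red_red.
have [_ hf2] := hf r' hr'.
apply: hf2; exists x; split => //; split => //.
apply: (@Pmon_le (f r') N x _ hx2).
apply: leq_trans (leq_maxr _ _).
apply: (leq_bigmax_seq (P := xpredT) (F := f)) => //.
apply: mem_vecs; first by rewrite /r' size_map.
move=> j hj; apply: red_entries; lia.
Qed.

Lemma good0 : good 0 (nseq k 0).
Proof.
move=> M _; have [x [hx1 hx2]] := Pex M; exists x; split => //; split => //.
rewrite /red expn0; apply: (@eq_from_nth _ 0); rewrite size_map ?size_nseq //.
move=> j hj; rewrite (nth_map 0) // nth_nseq; rewrite -hx1 hj; exact: modz1.
Qed.

Lemma good_size m r : good m r -> size r = k.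
Proof. by move=> /(_ m (leqnn m)) [x [h1 [_ <-]]]; rewrite size_map. Qed.

Fixpoint iterR (F : nat -> seq int -> seq int) (r0 : seq int) (m : nat) : seq int :=
  if m is m'.+1 then F m' (iterR F r0 m') else r0.

Theorem compact : exists X : seq (nat -> int), size X = k /\
  (forall j, (j < k)%N -> padic p (nth zfun0 X j)) /\ forall M, P M (vals X M).
Proof.
have hS : forall m r, exists r', good m r -> good m.+1 r' /\ red (p ^ m)%:Z r' = r.
  move=> m r; case: (classic (good m r)) => h; last by exists r.
  by have [r' hr'] := @good_step m r h; exists r'.
pose F m r := proj1_sig (constructive_indefinite_description _ (hS m r)).
have hF m r : good m r -> good m.+1 (F m r) /\ red (p ^ m)%:Z (F m r) = r.
  exact: (proj2_sig (constructive_indefinite_description _ (hS m r))).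
pose R := iterR F (nseq k 0).
have hR : forall m, good m (R m).
  elim => [|m IH]; first exact: good0.
  exact: (hF m _ IH).1.
have hRs m : size (R m) = k by exact: (@good_size m _ (hR m)).
have hRr m : red (p ^ m)%:Z (R m.+1) = R m by exact: (hF m _ (hR m)).2.
exists [seq (fun m => nth 0 (R m) j) | j <- iota 0 k].
split; first by rewrite size_map size_iota.
split.
  move=> j hj; rewrite (nth_map 0%N) ?size_iota // nth_iota // add0n => m.
  rewrite -(hRr m) /red (nth_map 0) ?hRs //.
  have := dvd_sub_mod (nth 0 (R m.+1) j) (p ^ m)%:Z; by [].
move=> M.
have -> : vals [seq (fun m => nth 0 (R m) j) | j <- iota 0 k] M = R M.
  rewrite /vals -map_comp; rewrite -[in RHS](mkseq_nth 0 (R M)) hRs; by [].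
have [x [hx1 [hx2 hx3]]] := hR M M (leqnn M).
apply: (@Pinv M x (R M) hx1 (hRs M) _ hx2) => j.
rewrite -hx3.
case: (ltnP j (size x)) => hj.
  rewrite /red (nth_map 0) //; exact: dvd_sub_mod.
by rewrite !nth_default ?size_map // subr0.
Qed.

End Compact.


Definition Tsum (a : seq nat) (v : seq int) : int :=
  \sum_(j < size a) (nth 0%N a j)%:Z * (nth 0 v j * (nth 0 v j + 1)).
Definition Qsum (a : seq nat) (v : seq int) : int :=
  \sum_(j < size a) (nth 0%N a j)%:Z * (nth 0 v j) ^+ 2.
Definition Ssum (a : seq nat) : int := \sum_(j < size a) (nth 0%N a j)%:Z.
Definition Rsum (a : seq nat) (v : seq int) : int :=
  \sum_(j < size a) (nth 0%N a j)%:Z * tri (nth 0 v j).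
Definition od (v : seq int) : seq int := [seq 2 * x + 1 | x <- v].

Lemma dvd_sum_diff (q : int) n (f g : 'I_n -> int) :
  (forall j, (q %| f j - g j)%Z) -> (q %| \sum_j f j - \sum_j g j)%Z.
Proof. move=> h; rewrite -sumrB; apply: rpred_sum => j _; exact: h. Qed.

Lemma dvd_diff_mul (q x y c : int) : (q %| x - y)%Z -> (q %| c * x - c * y)%Z.
Proof. by move=> h; rewrite -mulrBr dvdz_mull. Qed.

Lemma Tsum_cong (q : int) a v w : (forall j, (q %| nth 0 v j - nth 0 w j)%Z) ->
  (q %| Tsum a v - Tsum a w)%Z.
Proof.
move=> h; apply: dvd_sum_diff => j; apply: dvd_diff_mul.
have -> : nth 0 v j * (nth 0 v j + 1) - nth 0 w j * (nth 0 w j + 1) =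
   (nth 0 v j - nth 0 w j) * (nth 0 v j + nth 0 w j + 1) by ring.
exact: dvdz_mulr.
Qed.

Lemma Qsum_cong (q : int) a v w : (forall j, (q %| nth 0 v j - nth 0 w j)%Z) ->
  (q %| Qsum a v - Qsum a w)%Z.
Proof.
move=> h; apply: dvd_sum_diff => j; apply: dvd_diff_mul.
have -> : nth 0 v j ^+ 2 - nth 0 w j ^+ 2 =
   (nth 0 v j - nth 0 w j) * (nth 0 v j + nth 0 w j) by ring.
exact: dvdz_mulr.
Qed.

Lemma nth_od v j : (j < size v)%N -> nth 0 (od v) j = 2 * nth 0 v j + 1.
Proof. by move=> h; rewrite /od (nth_map 0). Qed.

Lemma Qsum_od a v : size v = size a -> Qsum a (od v) = 4 * Tsum a v + Ssum a.
Proof.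
move=> hs; rewrite /Qsum /Tsum /Ssum mulr_sumr -big_split /=.
apply: eq_bigr => j _; rewrite nth_od ?hs //; ring.
Qed.

Lemma Tsum_Rsum a v : Tsum a v = 2 * Rsum a v.
Proof.
rewrite /Tsum /Rsum mulr_sumr; apply: eq_bigr => j _.
by rewrite -tri2; ring.
Qed.

Lemma nth_scale (s : int) v j : nth 0 [seq s * x | x <- v] j = s * nth 0 v j.
Proof.
case: (ltnP j (size v)) => h; first by rewrite (nth_map 0).
by rewrite !nth_default ?size_map // mulr0.
Qed.

Lemma Qsum_scale a (s : int) v : Qsum a [seq s * x | x <- v] = s ^+ 2 * Qsum a v.
Proof.
rewrite /Qsum mulr_sumr; apply: eq_bigr => j _; rewrite nth_scale; ring.
Qed.

Lemma pexp_dvd (p : nat) M : ((p ^ M)%:Z %| (p ^ M.+1)%:Z)%Z.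
Proof. by rewrite dvdzE /=; apply: dvdn_exp2l. Qed.

Lemma pexp_dvd_le (p : nat) M N : (M <= N)%N -> ((p ^ M)%:Z %| (p ^ N)%:Z)%Z.
Proof. by move=> h; rewrite dvdzE /=; apply: dvdn_exp2l. Qed.

Definition solT (p M : nat) (a : seq nat) (n : nat) :=
  exists x : seq int, size x = size a /\ ((p ^ M)%:Z %| Tsum a x - 2%:Z * n%:Z)%Z.

Definition solQ (p M : nat) (b : seq nat) (t : int) :=
  exists y : seq int, size y = size b /\ ((p ^ M)%:Z %| t - Qsum b y)%Z.

Lemma padic_rep_iff p a n : (0 < p)%N ->
  padic_represents p a n <-> forall M, solT p M a n.
Proof.
move=> hp; split.
  move=> [X [hX [_ hsum]]] M; exists (vals X M); split; first by rewrite size_vals.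
  have := hsum M; congr (_ %| _)%Z; congr (_ - _).
  by apply: eq_bigr => j _; rewrite nth_vals.
move=> h.
pose P := fun M v => ((p ^ M)%:Z %| Tsum a v - 2%:Z * n%:Z)%Z.
have Pinv : forall M v w, size v = size a -> size w = size a ->
  (forall j, ((p ^ M)%:Z %| nth 0 v j - nth 0 w j)%Z) -> P M v -> P M w.
  move=> M v w _ _ hvw hv; rewrite /P.
  have -> : Tsum a w - 2%:Z * n%:Z = (Tsum a v - 2%:Z * n%:Z) - (Tsum a v - Tsum a w) by ring.
  apply: rpredB => //; exact: Tsum_cong.
have Pmon : forall M v, P M.+1 v -> P M v.
  move=> M v hv; exact: dvdz_trans (pexp_dvd p M) hv.
have [X [hX1 [hX2 hX3]]] := @compact p (size a) P hp Pinv Pmon h.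
exists X; split => //; split => // m.
have := hX3 m; rewrite /P; congr (_ %| _)%Z; congr (_ - _).
by apply: eq_bigr => j _; rewrite nth_vals.
Qed.

Lemma in_DQp_iff p b g : (0 < p)%N -> padic p g ->
  in_DQp p b g <-> forall M, solQ p M b (g M).
Proof.
move=> hp hg; split.
  move=> [Y [hY [_ hsum]]] M; exists (vals Y M); split; first by rewrite size_vals.
  have := hsum M; congr (_ %| _)%Z; congr (_ - _).
  by apply: eq_bigr => j _; rewrite nth_vals.
move=> h.
pose P := fun M v => ((p ^ M)%:Z %| g M - Qsum b v)%Z.
have Pinv : forall M v w, size v = size b -> size w = size b ->
  (forall j, ((p ^ M)%:Z %| nth 0 v j - nth 0 w j)%Z) -> P M v -> P M w.
  move=> M v w _ _ hvw hv; rewrite /P.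
  have -> : g M - Qsum b w = (g M - Qsum b v) + (Qsum b v - Qsum b w) by ring.
  apply: rpredD => //; exact: Qsum_cong.
have Pmon : forall M v, P M.+1 v -> P M v.
  move=> M v hv; rewrite /P.
  have -> : g M - Qsum b v = (g M.+1 - Qsum b v) - (g M.+1 - g M) by ring.
  apply: rpredB; first exact: dvdz_trans (pexp_dvd p M) hv.
  exact: hg.
have [X [hX1 [hX2 hX3]]] := @compact p (size b) P hp Pinv Pmon h.
exists X; split => //; split => // m.
have := hX3 m; rewrite /P; congr (_ %| _)%Z; congr (_ - _).
by apply: eq_bigr => j _; rewrite nth_vals.
Qed.


Lemma PoszX (p M : nat) : (p ^ M)%:Z = p%:Z ^+ M.
Proof. by elim: M => [|M IH] //; rewrite expnS exprS PoszM IH. Qed.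

Lemma half_exists (p M : nat) : odd p -> exists H : int, 2 * H = (p ^ M)%:Z + 1.
Proof.
move=> hp; exists ((p ^ M)./2.+1)%:Z.
have := odd_double_half (p ^ M); rewrite oddX hp orbT /= => h.
rewrite -{2}h; rewrite -muln2; lia.
Qed.

Lemma coprime_pow4 (p M : nat) : odd p -> coprimez (p ^ M)%:Z 4.
Proof.
move=> hp; rewrite coprimezE; change (coprime (p ^ M) (2 ^ 2)).
apply: coprimeXl; apply: coprimeXr.
by rewrite coprimen2.
Qed.

Lemma TS1 p M a n x : size x = size a ->
  ((p ^ M)%:Z %| Tsum a x - 2%:Z * n%:Z)%Z ->
  ((p ^ M)%:Z %| Qsum a (od x) - (8 * n%:Z + Ssum a))%Z.
Proof.
move=> hs h; rewrite Qsum_od //.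
have -> : 4 * Tsum a x + Ssum a - (8 * n%:Z + Ssum a) = 4 * (Tsum a x - 2%:Z * n%:Z).
  rewrite (_ : 2%:Z = 2) //; ring.
exact: dvdz_mull.
Qed.

Lemma od_half_cong (P H w : int) : 2 * H = P + 1 -> (P %| (2 * ((w - 1) * H) + 1) - w)%Z.
Proof.
move=> hH; have -> : 2 * ((w - 1) * H) + 1 - w = (w - 1) * P.
  have -> : 2 * ((w - 1) * H) = (w - 1) * (2 * H) by ring.
  rewrite hH; ring.
exact: dvdz_mull.
Qed.

Lemma TS2 p M b n w : odd p -> size w = size b ->
  ((p ^ M)%:Z %| Qsum b w - (8 * n%:Z + Ssum b))%Z -> solT p M b n.
Proof.
move=> hp hs h.
have [H hH] := @half_exists p M hp.
pose x := [seq (y - 1) * H | y <- w].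
have hxs : size x = size b by rewrite size_map.
exists x; split => //.
have hc : ((p ^ M)%:Z %| Qsum b (od x) - Qsum b w)%Z.
  apply: Qsum_cong => j.
  case: (ltnP j (size w)) => hj.
    rewrite nth_od ?size_map // (nth_map 0) //; exact: od_half_cong.
  by rewrite !nth_default ?size_map // subr0.
have : ((p ^ M)%:Z %| 4 * (Tsum b x - 2%:Z * n%:Z))%Z.
  have -> : 4 * (Tsum b x - 2%:Z * n%:Z) =
     (Qsum b (od x) - Qsum b w) + (Qsum b w - (8 * n%:Z + Ssum b)).
    rewrite Qsum_od // (_ : 2%:Z = 2) //; ring.
  exact: rpredD.
rewrite Gauss_dvdzr //; exact: coprime_pow4.
Qed.

Lemma inv_mod (p M : nat) (u : int) : prime p -> ~ (p%:Z %| u)%Z ->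
  exists h : int, ((p ^ M)%:Z %| u * h - 1)%Z.
Proof.
move=> hp hu.
have hc : coprimez (p ^ M)%:Z u.
  rewrite coprimezE /=; apply: coprimeXl; rewrite prime_coprime //.
  by apply/negP => hd; apply: hu; rewrite dvdzE.
have [u0 [v hb]] := Bezoutz (p ^ M)%:Z u.
move/eqP: hc => hg; rewrite hg in hb.
exists v; apply/dvdzP; exists (- u0); rewrite -hb; ring.
Qed.

Lemma sqrt1 (p : nat) (r : int) : odd p -> (p%:Z %| r - 1)%Z ->
  forall M, exists s : int, ((p ^ M)%:Z %| s ^+ 2 - r)%Z.
Proof.
move=> hp hr M.
have [H hH] := @half_exists p 1 hp.
rewrite expn1 in hH.
suff : exists s : int, (p%:Z %| s - 1)%Z /\ ((p ^ M.+1)%:Z %| s ^+ 2 - r)%Z.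
  by move=> [s [_ hs]]; exists s; exact: dvdz_trans (pexp_dvd p M) hs.
elim: M => [|M [s [hs1 hs2]]].
  exists 1; split; first by rewrite subrr dvdz0.
  rewrite expn1; have -> : 1 ^+ 2 - r = - (r - 1) by ring.
  by rewrite rpredN.
move/dvdzP: hs1 => [k hk]; move/dvdzP: hs2 => [e he].
set Q := p%:Z ^+ M.
exists (s - Q * p%:Z * e * H); split.
  have -> : s - Q * p%:Z * e * H - 1 = (k - Q * e * H) * p%:Z.
    rewrite -[s](subrK 1) hk; ring.
  exact: dvdz_mull.
have hs : s = 1 + k * p%:Z by rewrite -hk; ring.
have hrr : r = s ^+ 2 - e * (Q * p%:Z) by rewrite /Q -exprSr -PoszX -he; ring.
have E1 : (s - Q * p%:Z * e * H) ^+ 2 - r =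
   e * Q * p%:Z * (1 - s * (2 * H)) + (Q * p%:Z) ^+ 2 * e ^+ 2 * H ^+ 2.
  rewrite hrr; ring.
rewrite E1 hH hs PoszX !exprSr -/Q.
apply/dvdzP; exists (- e * (k + 1 + k * p%:Z) + Q * e ^+ 2 * H ^+ 2); ring.
Qed.


Lemma val_nat (p n : nat) : prime p -> (0 < n)%N ->
  exists t n0, n = (p ^ t * n0)%N /\ ~~ (p %| n0)%N.
Proof.
move=> hp hn; have [m hm1 hm2] := pfactor_coprime hp hn.
exists (logn p n), m; split; first by rewrite mulnC.
by rewrite -prime_coprime.
Qed.

Lemma val_int (p : nat) (q : int) : prime p -> q != 0 ->
  exists t q0, q = (p ^ t)%:Z * q0 /\ ~ (p%:Z %| q0)%Z.
Proof.
move=> hp hq.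
have hq' : (0 < `|q|)%N by rewrite absz_gt0.
have [t [n0 [h1 h2]]] := @val_nat p `|q|%N hp hq'.
exists t, ((-1) ^+ (q < 0)%R * n0%:Z); split.
  rewrite {1}(intEsign q) h1 PoszM; ring.
by rewrite dvdzE abszMsign /=; apply/negP.
Qed.

Lemma Hc_fin p c b M (g : int) : (0 < p)%N -> scaled_Zp_sub_DQp p c b ->
  solQ p M b (c%:Z * g).
Proof.
move=> hp Hc.
have hg : padic p (fun _ => g) by move=> m; rewrite subrr dvdz0.
have hcg : padic p (fun _ => c%:Z * g) by move=> m; rewrite subrr dvdz0.
exact: ((@in_DQp_iff p b _ hp hcg).1 (Hc _ hg) M).
Qed.

Lemma absorb p M b c (e : int) (yb : seq int) : prime p -> odd p -> (0 < c)%N ->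
  scaled_Zp_sub_DQp p c b -> size yb = size b ->
  exists w, size w = size b /\ ((p ^ M)%:Z %| Qsum b w - (Qsum b yb + c%:Z * e))%Z.
Proof.
move=> hp hodd hc Hc hyb.
have hp0 : (0 < p)%N by apply: prime_gt0.
have [v [u [hcu hu]]] := @val_nat p c hp hc.
set q := Qsum b yb.
case: (classic ((p ^ v)%:Z %| q)%Z) => hq.
  move/dvdzP: hq => [q' hq'].
  have hu' : ~ (p%:Z %| u%:Z)%Z by move=> hd; move/negP: hu; apply; rewrite dvdzE in hd.
  have [h hh] := @inv_mod p M u%:Z hp hu'.
  have [y [hy1 hy2]] := @Hc_fin p c b M ((q' + u%:Z * e) * h) hp0 Hc.
  exists y; split => //.
  have -> : Qsum b y - (q + c%:Z * e) =
     (c%:Z * ((q' + u%:Z * e) * h) - (q + c%:Z * e)) - (c%:Z * ((q' + u%:Z * e) * h) - Qsum b y) by ring.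
  apply: rpredB => //.
  rewrite hq' hcu PoszM.
  have -> : (p ^ v)%:Z * u%:Z * ((q' + u%:Z * e) * h) - (q' * (p ^ v)%:Z + (p ^ v)%:Z * u%:Z * e)
     = (p ^ v)%:Z * (q' + u%:Z * e) * (u%:Z * h - 1) by ring.
  exact: dvdz_mull.
have hq0 : q != 0 by apply/eqP => h0; apply: hq; rewrite h0 dvdz0.
have [t [q0 [hq1 hq2]]] := @val_int p q hp hq0.
have htv : (t < v)%N.
  rewrite ltnNge; apply/negP => hvt; apply: hq; rewrite hq1.
  apply: dvdz_mulr; exact: pexp_dvd_le.
have [h hh] := @inv_mod p M q0 hp hq2.
pose r := 1 + (p ^ (v - t))%:Z * u%:Z * e * h.
have hr : (p%:Z %| r - 1)%Z.
  have -> : r - 1 = (p ^ (v - t))%:Z * (u%:Z * e * h) by rewrite /r; ring.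
  apply: dvdz_mulr; rewrite (_ : p%:Z = (p ^ 1)%:Z); last by rewrite expn1.
  apply: pexp_dvd_le; lia.
have [s hs] := @sqrt1 p r hodd hr M.
exists [seq s * x | x <- yb]; split; first by rewrite size_map.
rewrite Qsum_scale -/q.
have hpv : (p ^ v)%:Z = (p ^ t)%:Z * (p ^ (v - t))%:Z by rewrite -PoszM -expnD subnKC // ltnW.
have -> : s ^+ 2 * q - (q + c%:Z * e) =
   (p ^ t)%:Z * q0 * (s ^+ 2 - r) + c%:Z * e * (q0 * h - 1).
  rewrite /r hq1 hcu PoszM hpv; ring.
apply: rpredD; first exact: dvdz_mull.
exact: dvdz_mull hh.
Qed.


Lemma Qsum_del a i y : (i < size a)%N -> size y = size a ->
  Qsum a y = (nth 0%N a i)%:Z * (nth 0 y i) ^+ 2 + Qsum (del a i) (dl y i).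
Proof.
move=> hi hy; rewrite /Qsum (@sum_del_gen a y i (fun a v => a%:Z * v ^+ 2)) //.
by rewrite hy.
Qed.

Lemma Ssum_del a i : (i < size a)%N -> Ssum a = (nth 0%N a i)%:Z + Ssum (del a i).
Proof.
move=> hi; rewrite /Ssum.
have := @sum_del_gen a (nseq (size a) 0) i (fun a _ => a%:Z) hi.
by rewrite size_nseq => ->.
Qed.

Lemma Tsum_ins a i x e : (i < size a)%N -> size x = size (del a i) ->
  Tsum a (ins x i e) = (nth 0%N a i)%:Z * (e * (e + 1)) + Tsum (del a i) x.
Proof.
move=> hi hx; rewrite /Tsum (@sum_ins_gen a x i e (fun a v => a%:Z * (v * (v + 1)))) //.
rewrite hx del_dl size_del //; lia.
Qed.

Lemma Rsum_ins a i x e : (i < size a)%N -> size x = size (del a i) ->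
  Rsum a (ins x i e) = (nth 0%N a i)%:Z * tri e + Rsum (del a i) x.
Proof.
move=> hi hx; rewrite /Rsum (@sum_ins_gen a x i e (fun a v => a%:Z * tri v)) //.
rewrite hx del_dl size_del //; lia.
Qed.

Lemma size_del_nat a i : (i < size a)%N -> size (del a i) = (size a).-1.
Proof. by move=> h; rewrite del_dl size_del. Qed.

Lemma size_ins_del a i (x : seq int) e : (i < size a)%N -> size x = size (del a i) ->
  size (ins x i e) = size a.
Proof. move=> hi hx; rewrite size_ins hx size_del_nat //; lia. Qed.

Lemma tri0 : tri 0 = 0. Proof. by []. Qed.
Lemma tri1 : tri 1 = 1. Proof. by []. Qed.

Lemma rep_lift a i n : (i < size a)%N -> represents (del a i) n -> represents a n.
Proof.
move=> hi [x [hx hs]]; exists (ins x i 0); split; first exact: size_ins_del.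
have := @Rsum_ins a i x 0 hi hx; rewrite /Rsum tri0 mulr0 add0r => ->; exact: hs.
Qed.

Lemma solT_lift p M a i n : (i < size a)%N -> solT p M (del a i) n -> solT p M a n.
Proof.
move=> hi [x [hx hs]]; exists (ins x i 0); split; first exact: size_ins_del.
by rewrite Tsum_ins // mul0r mulr0 add0r.
Qed.

Lemma loc_lift a i n : (i < size a)%N -> loc_represents (del a i) n -> loc_represents a n.
Proof.
move=> hi h p hp; have hp0 := prime_gt0 hp.
apply/(padic_rep_iff _ _ _ hp0) => M; apply: (@solT_lift p M a i n hi).
exact: ((padic_rep_iff _ _ _ hp0).1 (h p hp) M).
Qed.

Lemma glob_loc a n : represents a n -> loc_represents a n.
Proof.
move=> [x [hx hs]] p hp; apply/(padic_rep_iff _ _ _ (prime_gt0 hp)) => M.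
exists x; split => //.
rewrite Tsum_Rsum; have -> : Rsum a x = n%:Z by exact: hs.
by rewrite subrr dvdz0.
Qed.

Lemma solT_odd p M a i n : prime p -> odd p -> (i < size a)%N -> (0 < nth 0%N a i)%N ->
  scaled_Zp_sub_DQp p (nth 0%N a i) (del a i) ->
  solT p M a n -> solT p M (del a i) n.
Proof.
move=> hp hodd hi hc Hc [x [hx hs]].
have h1 := @TS1 p M a n x hx hs.
have hy : size (od x) = size a by rewrite size_map.
rewrite (@Qsum_del a i (od x) hi hy) (@Ssum_del a i hi) in h1.
set c := nth 0%N a i in h1 hc Hc *.
have hyb : size (dl (od x) i) = size (del a i) by rewrite !size_del ?hy // del_dl.
have [w [hw1 hw2]] := @absorb p M (del a i) c (nth 0 (od x) i ^+ 2 - 1) _ hp hodd hc Hc hyb.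
apply: (@TS2 p M (del a i) n w hodd hw1).
have -> : Qsum (del a i) w - (8 * n%:Z + Ssum (del a i)) =
   (Qsum (del a i) w - (Qsum (del a i) (dl (od x) i) + c%:Z * (nth 0 (od x) i ^+ 2 - 1)))
   + (c%:Z * nth 0 (od x) i ^+ 2 + Qsum (del a i) (dl (od x) i) - (8 * n%:Z + (c%:Z + Ssum (del a i)))) by ring.
exact: rpredD.
Qed.

Lemma foldr_gcd_dvd (d : nat) (s : seq nat) :
  (forall j, (j < size s)%N -> (d %| nth 0%N s j)%N) -> (d %| foldr gcdn 0%N s)%N.
Proof.
elim: s => [|x s IH] h /=; first exact: dvdn0.
rewrite dvdn_gcd (h 0%N isT) /=; apply: IH => j hj; exact: (h j.+1).
Qed.

Lemma dvd_foldr_gcd (s : seq nat) j : (j < size s)%N -> (foldr gcdn 0%N s %| nth 0%N s j)%N.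
Proof.
elim: s j => [|x s IH] [|j] //= hj; first exact: dvdn_gcdl.
exact: dvdn_trans (dvdn_gcdr _ _) (IH j hj).
Qed.

Lemma prim_odd b : primitive b -> exists j, (j < size b)%N /\ odd (nth 0%N b j).
Proof.
move=> hb; apply: NNPP => hn.
have : (2 %| coef_gcd b)%N.
  apply: foldr_gcd_dvd => j hj.
  case: (boolP (odd (nth 0%N b j))) => ho; first by exfalso; apply: hn; exists j.
  by rewrite dvdn2.
by move: hb; rewrite /primitive => ->.
Qed.

Lemma lift2 (B n : nat) : odd B -> forall M, exists s : int,
  ((2 ^ M.+1)%:Z %| B%:Z * (s * (s + 1)) - 2%:Z * n%:Z)%Z.
Proof.
move=> hB; elim => [|M [s hs]].
  exists 0; rewrite mul0r mulr0 sub0r rpredN expn1; exact: dvdz_mulr.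
move/dvdzP: hs => [e he].
have hB2 : B%:Z = 2 * (B./2)%:Z + 1.
  have := odd_double_half B; rewrite hB -muln2 => h; lia.
set m := (B./2)%:Z in hB2.
rewrite PoszX exprSr in he.
set Q := (2%:Z) ^+ M in he.
exists (s - Q * 2 * e * B%:Z * (2 * s + 1)).
have hN : 2%:Z * n%:Z = B%:Z * (s * (s + 1)) - e * (Q * 2) by rewrite -he; ring.
rewrite hN hB2 PoszX !exprSr -/Q.
apply/dvdzP.
exists (- 2 * e * (2 * m * s + m + s) * (2 * m * s + m + s + 1)
        + Q * (2 * m + 1) ^+ 3 * e ^+ 2 * (2 * s + 1) ^+ 2).
ring.
Qed.

Lemma Tsum_nseq0 b : Tsum b (nseq (size b) 0) = 0.
Proof.
rewrite /Tsum big1 // => j _; rewrite nth_nseq; case: ifP => _; ring.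
Qed.

Lemma solT_2 b n M : primitive b -> solT 2 M b n.
Proof.
move=> hb; have [j [hj ho]] := @prim_odd b hb.
have [s hs] := @lift2 (nth 0%N b j) n ho M.
exists (ins (nseq (size (del b j)) 0) j s); split.
  by apply: size_ins_del => //; rewrite size_nseq.
rewrite Tsum_ins //; last by rewrite size_nseq.
rewrite Tsum_nseq0 addr0.
exact: dvdz_trans (pexp_dvd 2 M) hs.
Qed.

Lemma loc_down a i n : (i < size a)%N -> (0 < nth 0%N a i)%N ->
  primitive (del a i) ->
  (forall p, prime p -> odd p -> scaled_Zp_sub_DQp p (nth 0%N a i) (del a i)) ->
  loc_represents a n -> loc_represents (del a i) n.
Proof.
move=> hi hc hb Hc h p hp; have hp0 := prime_gt0 hp.
apply/(padic_rep_iff _ _ _ hp0) => M.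
case: (even_prime hp) => [->|hodd]; first exact: solT_2.
apply: (@solT_odd p M a i n hp hodd hi hc (Hc p hp hodd)).
exact: ((padic_rep_iff _ _ _ hp0).1 (h p hp) M).
Qed.


Lemma Rsum_ge0 b x : 0 <= Rsum b x.
Proof. by apply: sumr_ge0 => j _; apply: mulr_ge0 => //; apply: tri_ge0. Qed.

Lemma Qsum_od_R a v : size v = size a -> Qsum a (od v) = 8 * Rsum a v + Ssum a.
Proof. by move=> h; rewrite Qsum_od // Tsum_Rsum mulrA. Qed.

Lemma stepK p M a i : prime p -> odd p -> (i < size a)%N -> (0 < nth 0%N a i)%N ->
  (forall n, (0 < n)%N -> represents (del a i) n <-> represents a n) ->
  forall w, size w = size (del a i) -> exists w', size w' = size (del a i) /\
    ((p ^ M)%:Z %| Qsum (del a i) w' - (Qsum (del a i) w - (nth 0%N a i)%:Z))%Z.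
Proof.
move=> hp hodd hi hc HO w hw.
set b := del a i in HO hw *; set c := nth 0%N a i in hc *.
have hp2 := prime_gt1 hp.
have [H hH] := @half_exists p M hodd.
pose x := [seq (y - 1) * H | y <- w].
have hxs : size x = size b by rewrite size_map.
pose X := (p ^ M.+1)./2.
have hX : (1 + X.*2 = p ^ M.+1)%N.
  by have := odd_double_half (p ^ M.+1); rewrite oddX hodd orbT.
have hX1 : (1 <= X)%N.
  have : (p <= p ^ M.+1)%N by rewrite -{1}(expn1 p) leq_exp2l //; lia.
  have : p != 2%N by apply/eqP => h2; rewrite h2 in hodd.
  lia.
pose nz := Rsum b x + c%:Z * tri X%:Z.
have htX : 0 < tri X%:Z.
  have := tri2 X%:Z; have : 2 <= X%:Z * (X%:Z + 1) by nia.
  lia.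
have hnz : 0 < nz.
  have := Rsum_ge0 b x; have : 0 < c%:Z * tri X%:Z by apply: mulr_gt0 => //.
  rewrite /nz; lia.
pose n := `|nz|%N.
have hn : n%:Z = nz by rewrite /n gez0_abs // ltW.
have hn0 : (0 < n)%N by rewrite /n absz_gt0 gt_eqF.
have hra : represents a n.
  exists (ins x i X%:Z); split; first exact: size_ins_del.
  have := @Rsum_ins a i x X%:Z hi hxs; rewrite /Rsum => ->.
  by rewrite hn /nz addrC.
have [x' [hx'1 hx'2]] := (HO n hn0).2 hra.
exists (od x'); split; first by rewrite size_map.
have hQ' : Qsum b (od x') = 8 * nz + Ssum b.
  rewrite Qsum_od_R // -hn; congr (_ * _ + _); exact: hx'2.
have hQx : Qsum b (od x) = 8 * Rsum b x + Ssum b by rewrite Qsum_od_R.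
have hcong : ((p ^ M)%:Z %| Qsum b (od x) - Qsum b w)%Z.
  apply: Qsum_cong => j.
  case: (ltnP j (size w)) => hj.
    rewrite nth_od ?size_map // (nth_map 0) //; exact: od_half_cong.
  by rewrite !nth_default ?size_map // subr0.
have h8 : 8 * tri X%:Z = (p ^ M.+1)%:Z ^+ 2 - 1.
  rewrite -hX -muln2 PoszD PoszM.
  have h2 := tri2 X%:Z.
  have -> : 8 * tri X%:Z = 4 * (2 * tri X%:Z) by ring.
  rewrite h2; ring.
have -> : Qsum b (od x') - (Qsum b w - c%:Z) =
   (Qsum b (od x) - Qsum b w) + c%:Z * (p ^ M.+1)%:Z ^+ 2.
  rewrite hQ' hQx /nz.
  have -> : 8 * (Rsum b x + c%:Z * tri X%:Z) = 8 * Rsum b x + c%:Z * (8 * tri X%:Z) by ring.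
  rewrite h8; ring.
apply: rpredD => //; apply: dvdz_mull; rewrite expr2; apply: dvdz_mulr.
exact: pexp_dvd.
Qed.

Lemma iterK p M a i : prime p -> odd p -> (i < size a)%N -> (0 < nth 0%N a i)%N ->
  (forall n, (0 < n)%N -> represents (del a i) n <-> represents a n) ->
  forall k : nat, exists w, size w = size (del a i) /\
    ((p ^ M)%:Z %| Qsum (del a i) w + k%:Z * (nth 0%N a i)%:Z)%Z.
Proof.
move=> hp hodd hi hc HO; elim => [|k [w [hw1 hw2]]].
  exists (nseq (size (del a i)) 0); split; first by rewrite size_nseq.
  rewrite mul0r addr0 /Qsum big1 ?dvdz0 // => j _; rewrite nth_nseq; case: ifP => _; ring.
have [w' [hw'1 hw'2]] := @stepK p M a i hp hodd hi hc HO w hw1.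
exists w'; split => //.
have -> : Qsum (del a i) w' + k.+1%:Z * (nth 0%N a i)%:Z =
   (Qsum (del a i) w' - (Qsum (del a i) w - (nth 0%N a i)%:Z)) +
   (Qsum (del a i) w + k%:Z * (nth 0%N a i)%:Z).
  rewrite -addn1 PoszD; ring.
exact: rpredD.
Qed.

Lemma contain p a i : prime p -> odd p -> (i < size a)%N -> (0 < nth 0%N a i)%N ->
  (forall n, (0 < n)%N -> represents (del a i) n <-> represents a n) ->
  scaled_Zp_sub_DQp p (nth 0%N a i) (del a i).
Proof.
move=> hp hodd hi hc HO g hg.
have hp0 := prime_gt0 hp.
have hcg : padic p (fun m => (nth 0%N a i)%:Z * g m).
  move=> m; rewrite -mulrBr; apply: dvdz_mull; exact: hg.
apply/(@in_DQp_iff p (del a i) _ hp0 hcg) => M.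
set P := (p ^ M)%:Z.
have hP : 0 < P by rewrite /P ltz_nat expn_gt0 hp0.
pose k := `|((- g M) %% P)%Z|%N.
have hk : k%:Z = ((- g M) %% P)%Z by rewrite /k gez0_abs // modz_ge0 // gt_eqF.
have [w [hw1 hw2]] := @iterK p M a i hp hodd hi hc HO k.
exists w; split => //.
have -> : (nth 0%N a i)%:Z * g M - Qsum (del a i) w =
  - (Qsum (del a i) w + k%:Z * (nth 0%N a i)%:Z) + (nth 0%N a i)%:Z * (k%:Z - (- g M)) by ring.
apply: rpredD; first by rewrite rpredN.
apply: dvdz_mull; rewrite hk.
have := dvd_sub_mod (- g M) P; rewrite -rpredN opprB; by [].
Qed.

Lemma prim_del a i : (i < size a)%N -> primitive a ->
  (forall n, (0 < n)%N -> represents (del a i) n <-> represents a n) ->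
  (0 < nth 0%N a i)%N -> primitive (del a i).
Proof.
move=> hi hpa HO hc.
have hra : represents a (nth 0%N a i).
  exists (ins (nseq (size (del a i)) 0) i 1); split.
    by apply: size_ins_del => //; rewrite size_nseq.
  have hs0 : size (nseq (size (del a i)) (0:int)) = size (del a i) by rewrite size_nseq.
  have := @Rsum_ins a i (nseq (size (del a i)) 0) 1 hi hs0.
  rewrite /Rsum => ->; rewrite tri1 mulr1 big1 ?addr0 // => j _.
  by rewrite nth_nseq; case: ifP => _; rewrite tri0 mulr0.
have [x [hx1 hx2]] := (HO _ hc).2 hra.
set d := coef_gcd (del a i).
have hdj : forall j, (j < size (del a i))%N -> (d %| nth 0%N (del a i) j)%N.
  move=> j hj; exact: dvd_foldr_gcd.
have hdc : (d %| nth 0%N a i)%N.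
  have : (d%:Z %| (nth 0%N a i)%:Z)%Z.
    rewrite -hx2; apply: rpred_sum => j _; apply: dvdz_mulr.
    by rewrite dvdzE /=; apply: hdj.
  by rewrite dvdzE.
have : (d %| coef_gcd a)%N.
  apply: foldr_gcd_dvd => j hj.
  case: (ltngtP j i) => hji.
  - have := hdj j; rewrite del_dl nth_del // hji; apply; rewrite size_del; lia.
  - have := hdj j.-1; rewrite del_dl nth_del //.
    rewrite (_ : (j.-1 < i)%N = false); last lia.
    rewrite (_ : j.-1.+1 = j); last lia.
    apply; rewrite size_del; lia.
  - by rewrite hji.
by move: hpa; rewrite /primitive => ->; rewrite dvdn1 => /eqP.
Qed.

Local Close Scope ring_scope.

Theorem lemma3p1 (a : seq nat) :
  (3 <= size a)%N ->
  all (fun c => 0 < c)%N a ->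
  primitive a ->
  (old_regular a <->
   exists i : nat, (i < size a)%N /\
     primitive (del a i) /\ regular (del a i) /\
     forall p : nat, prime p -> odd p -> scaled_Zp_sub_DQp p (nth 0%N a i) (del a i)).
Proof.
move=> hk hpos hprim.
have hc : forall i, (i < size a)%N -> (0 < nth 0%N a i)%N.
  by move=> i hi; apply: (all_nthP 0%N hpos).
split.
  move=> [hreg [i [hi HO]]]; exists i; split => //; split.
    exact: prim_del hi hprim HO (hc i hi).
  split.
    move=> n hn hloc; apply/(HO n hn); apply: hreg => //.
    exact: loc_lift hi hloc.
  move=> p hp hodd; exact: contain hp hodd hi (hc i hi) HO.
move=> [i [hi [hb [hregb Hc]]]].
have hdown : forall n, loc_represents a n -> loc_represents (del a i) n.
  move=> n; exact: loc_down hi (hc i hi) hb Hc.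
split.
  move=> n hn hloc; apply: (@rep_lift a i n hi); apply: hregb => //; exact: hdown.
exists i; split => // n hn; split.
  exact: (@rep_lift a i n hi).
move=> hr; apply: hregb => //; apply: hdown; exact: glob_loc.
Qed.
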